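(* Let $\alpha,\beta\in\mathbb{C}$ with $(\alpha,\beta)\notin\mathbb{Z}^2$. Then $\mathrm{H}^1(\mathcal{W},\mathcal{F}_\alpha\otimes\mathcal{F}_\beta)=0$ if $\alpha+\beta\neq 1$, and if $\alpha+\beta=1$ then $\mathrm{H}^1(\mathcal{W},\mathcal{F}_{1-\beta}\otimes\mathcal{F}_\beta)$ is one-dimensional, spanned by the class of the 1-cocycle $\mathrm{d}_{1-\beta,\beta}$ defined by $$\mathrm{d}_{1-\beta,\beta}(L_n)=\begin{cases}\sum_{i=0}^{n-1}(i-n\beta)v_i\otimes v_{n-i},&n\geq1;\\ 0,&n=0;\\ -\sum_{i=n}^{-1}(i-n\beta)v_i\otimes v_{n-i},&n\leq -1.\end{cases}$$
   Context: The Witt algebra $\mathcal{W}$ is the complex Lie algebra with basis $\{L_n\mid n\in\mathbb{Z}\}$ and bracket $[L_m,L_n]=(m-n)L_{m+n}$. For $\alpha\in\mathbb{C}$, the tensor density module $\mathcal{F}_\alpha$ has basis $\{v_n\mid n\in\mathbb{Z}\}$ with $L_m\cdot v_n=-(\alpha m+n)v_{m+n}$. The tensor product $\mathcal{F}_\alpha\otimes\mathcal{F}_\beta$ is a $\mathcal{W}$-module via $L_m\cdot(v_i\otimes v_j)=-(i+\alpha m)v_{m+i}\otimes v_j-(j+\beta m)v_i\otimes v_{m+j}$. For a Lie algebra $L$ and $L$-module $M$, $\mathrm{Der}(L,M)$ is the space of 1-cocycles (linear $d:L\to M$ with $d([x,y])=x\cdot d(y)-y\cdot d(x)$), $\mathrm{Inn}(L,M)$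 the space of 1-coboundaries $d_v(x)=x\cdot v$ ($v\in M$), and $\mathrm{H}^1(L,M)=\mathrm{Der}(L,M)/\mathrm{Inn}(L,M)$. *)

(* Defs.v *)
From mathcomp Require Import all_boot all_order all_algebra complex.
From mathcomp Require Import Rstruct.
Set Implicit Arguments. Unset Strict Implicit. Unset Printing Implicit Defensive.
Import Order.TTheory GRing.Theory Num.Theory.
Local Open Scope ring_scope.

Definition CC : Type := complex Rdefinitions.R.

(* An element  sum_{i,j} f(i,j) v_i (x) v_j  of F_alpha (x) F_beta is
   represented by its coefficient function f : int -> int -> CC, which must be
   finitely supported. *)
Definition tens := int -> int -> CC.

Definition fin_supp (f : tens) : Prop :=
  exists N : int, forall i j : int,
    (N < `|i|) || (N < `|j|) -> f i j = 0.

(* The action of L_m on F_alpha (x) F_beta, in coefficients: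
   L_m (v_i (x) v_j) = -(i + alpha m) v_{m+i} (x) v_j - (j + beta m) v_i (x) v_{m+j},
   so the coefficient of v_a (x) v_b in L_m . f is
   -((a-m) + alpha m) f(a-m,b) - ((b-m) + beta m) f(a,b-m). *)
Definition act (alpha beta : CC) (m : int) (f : tens) : tens :=
  fun a b =>
    - (((a - m)%:~R + alpha * m%:~R) * f (a - m) b)
    - (((b - m)%:~R + beta * m%:~R) * f a (b - m)).

(* A linear map d : W -> M is determined by its values d(L_n), n in Z
   (the L_n form a basis of W); we represent it by  d : int -> tens.
   1-cocycle condition d([L_m,L_n]) = L_m.d(L_n) - L_n.d(L_m), where by
   linearity d([L_m,L_n]) = (m-n) d(L_{m+n}). *)
Definition is_der (alpha beta : CC) (d : int -> tens) : Prop :=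
  (forall n, fin_supp (d n)) /\
  forall m n : int, forall a b : int,
    (m - n)%:~R * d (m + n) a b
    = act alpha beta m (d n) a b - act alpha beta n (d m) a b.

Definition is_inn (alpha beta : CC) (d : int -> tens) : Prop :=
  exists v : tens, fin_supp v /\
    forall n : int, forall a b : int, d n a b = act alpha beta n v a b.

Definition H1_zero (alpha beta : CC) : Prop :=
  forall d, is_der alpha beta d -> is_inn alpha beta d.

Definition dcoc (beta : CC) (n : int) : tens :=
  fun a b =>
    if (a + b == n) then
      if (0 < n) && (0 <= a) && (a < n) then a%:~R - n%:~R * beta
      else if (n < 0) && (n <= a) && (a < 0) then - (a%:~R - n%:~R * beta)
      else 0
    else 0.

Definition is_int (x : CC) : Prop := exists z : int, x = z%:~R.

(* Main.v *)
Require Import Defs.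
From mathcomp Require Import all_boot all_order all_algebra complex.
From mathcomp Require Import Rstruct ring lra zify.
Import GRing.Theory Num.Theory.
Local Open Scope ring_scope.
Definition der' (al be : CC) (d : int -> tens) : Prop :=
  forall m n a b : int, (m - n)%:~R * d (m + n) a b
    = act al be m (d n) a b - act al be n (d m) a b.

Lemma act_module al be f m n a b :
  act al be m (act al be n f) a b - act al be n (act al be m f) a b
  = (m - n)%:~R * act al be (m + n) f a b.
Proof.
rewrite /act.
rewrite (_ : a - m - n = a - (m + n)); last by ring.
rewrite (_ : a - n - m = a - (m + n)); last by ring.
rewrite (_ : b - m - n = b - (m + n)); last by ring.
rewrite (_ : b - n - m = b - (m + n)); last by ring.
ring.
Qed.

Lemma act_ext al be m f g a b : (forall a b, f a b = g a b) ->
  act al be m f a b = act al be m g a b.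
Proof. by move=> H; rewrite /act !H. Qed.

Lemma act_sub al be m f g a b :
  act al be m (fun a b => f a b - g a b) a b = act al be m f a b - act al be m g a b.
Proof. rewrite /act; ring. Qed.

Lemma act_add al be m f g a b :
  act al be m (fun a b => f a b + g a b) a b = act al be m f a b + act al be m g a b.
Proof. rewrite /act; ring. Qed.

Lemma act_scale al be m c f a b :
  act al be m (fun a b => c * f a b) a b = c * act al be m f a b.
Proof. rewrite /act; ring. Qed.

Lemma act0 al be m f a b : (forall a b, f a b = 0) -> act al be m f a b = 0.
Proof. by move=> H; rewrite /act !H; ring. Qed.

Lemma der'_act al be f : der' al be (fun n => act al be n f).
Proof. by move=> m n a b; rewrite act_module. Qed.

Lemma der'_sub al be d1 d2 : der' al be d1 -> der' al be d2 ->
  der' al be (fun n a b => d1 n a b - d2 n a b).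
Proof.
move=> H1 H2 m n a b; rewrite !act_sub mulrBr H1 H2; ring.
Qed.

Lemma der'_of al be d : is_der al be d -> der' al be d.
Proof. by case. Qed.

Lemma intr_neq0 (z : int) : z != 0 -> (z%:~R : CC) != 0.
Proof. by rewrite intr_eq0. Qed.

Lemma gen_zero al be e : der' al be e ->
  (forall a b, e 1 a b = 0) -> (forall a b, e (-1) a b = 0) ->
  (forall a b, e 2 a b = 0) -> (forall a b, e (-2) a b = 0) ->
  forall n a b, e n a b = 0.
Proof.
move=> H h1 hm1 h2 hm2.
have h0 : forall a b, e 0 a b = 0.
  move=> a b; have := H 1 (-1) a b.
  rewrite (act0 _ _ _ _ _ _ hm1) (act0 _ _ _ _ _ _ h1) subrr addrN.
  move/eqP; rewrite mulf_eq0 => /orP [|/eqP //].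
  by rewrite intr_eq0.
have step : forall k : nat, (forall a b, e k.+1%:Z a b = 0 /\ e (- k.+1%:Z) a b = 0)
                 /\ (forall a b, e k.+2%:Z a b = 0 /\ e (- k.+2%:Z) a b = 0).
  elim=> [|k [IH1 IH2]].
    split=> a b; split=> //.
  split=> // a b; split.
    have := H 1 k.+2%:Z a b.
    rewrite (act0 _ _ _ _ _ _ (fun a b => proj1 (IH2 a b))) (act0 _ _ _ _ _ _ h1) subrr.
    rewrite (_ : 1 + k.+2%:Z = k.+3%:Z); last by lia.
    move/eqP; rewrite mulf_eq0 => /orP [|/eqP //].
    rewrite intr_eq0; lia.
  have := H (-1) (- k.+2%:Z) a b.
  rewrite (act0 _ _ _ _ _ _ (fun a b => proj2 (IH2 a b))) (act0 _ _ _ _ _ _ hm1) subrr.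
  rewrite (_ : -1 + - k.+2%:Z = - k.+3%:Z); last by lia.
  move/eqP; rewrite mulf_eq0 => /orP [|/eqP //].
  rewrite intr_eq0; lia.
case=> [[|k]|k] a b; first exact: h0.
  by case: (step k) => /(_ a b) [].
by rewrite NegzE; case: (step k) => /(_ a b) [].
Qed.
Arguments der'_sub {al be d1 d2}.
Arguments intr_neq0 {z}.

Lemma up_ind (P : int -> Prop) (N : int) :
  (forall a, a < N -> P a) -> (forall a, P (a - 1) -> P a) -> forall a, P a.
Proof.
move=> H0 HS.
have: forall k : nat, forall a, a < N + k%:Z -> P a.
  elim=> [|k IH] a ha; first by apply: H0; lia.
  have [h|h] := boolP (a < N + k%:Z); first exact: IH.
  apply: HS; apply: IH; lia.
move=> H a; apply: (H (absz (a - N)).+1); lia.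
Qed.

Lemma down_ind (P : int -> Prop) (N : int) :
  (forall a, N < a -> P a) -> (forall a, P (a + 1) -> P a) -> forall a, P a.
Proof.
move=> H0 HS.
have: forall k : nat, forall a, N - k%:Z < a -> P a.
  elim=> [|k IH] a ha; first by apply: H0; lia.
  have [h|h] := boolP (N - k%:Z < a); first exact: IH.
  apply: HS; apply: IH; lia.
move=> H a; apply: (H (absz (a - N)).+1); lia.
Qed.

Lemma fsP (f : tens) : fin_supp f -> exists N : int, 0 <= N /\
  forall a b, (a < - N) || (N < a) || (b < - N) || (N < b) -> f a b = 0.
Proof.
case=> N HN; exists `|N|; split; first lia.
move=> a b h; apply: HN; lia.
Qed.

Lemma fsI (f : tens) (N : int) :
  (forall a b, (a < - N) || (N < a) || (b < - N) || (N < b) -> f a b = 0) -> fin_supp f.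
Proof. move=> H; exists `|N|; move=> a b h; apply: H; lia. Qed.

Lemma fs_act al be m f : fin_supp f -> fin_supp (act al be m f).
Proof.
move=> /fsP [N [N0 HN]]; apply: (@fsI _ (N + `|m|)) => a b h.
rewrite /act.
have [h1|h1] := boolP ((a < - N) || (N < a)).
  rewrite !HN; try lia. ring.
rewrite !HN; try lia. ring.
Qed.

Lemma fs_sub f g : fin_supp f -> fin_supp g -> fin_supp (fun a b => f a b - g a b).
Proof.
move=> /fsP [N [N0 HN]] /fsP [M [M0 HM]]; apply: (@fsI _ (N + M)) => a b h.
rewrite HN ?HM ?subrr //; lia.
Qed.

Lemma fs_add f g : fin_supp f -> fin_supp g -> fin_supp (fun a b => f a b + g a b).
Proof.
move=> /fsP [N [N0 HN]] /fsP [M [M0 HM]]; apply: (@fsI _ (N + M)) => a b h.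
rewrite HN ?HM ?addr0 //; lia.
Qed.
Arguments fs_sub {f g}.
Arguments fs_add {f g}.
Arguments fs_act al be m {f}.
Arguments fsP {f}.

Definition diag (U0 : int -> CC) : tens := fun a b => if a + b == 0 then U0 a else 0.
Definition V0 (a : int) : CC := if 0 <= a then 1 else 0.

Lemma act_diag al be m U0 a b : act al be m (diag U0) a b =
  if a + b == m then - (((a - m)%:~R + al * m%:~R) * U0 (a - m)) + (a%:~R - be * m%:~R) * U0 a
  else 0.
Proof.
rewrite /act /diag.
have [h|h] := eqVneq (a + b) m.
  rewrite (_ : (a - m + b == 0) = true); last by apply/eqP; lia.
  rewrite (_ : (a + (b - m) == 0) = true); last by apply/eqP; lia.
  have -> : b = m - a by lia.
  ring.
rewrite (_ : (a - m + b == 0) = false); last by apply/eqP; lia.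
rewrite (_ : (a + (b - m) == 0) = false); last by apply/eqP; lia.
ring.
Qed.

Lemma dcocE be n a b : dcoc be n a b = act (1 - be) be n (diag V0) a b.
Proof.
rewrite act_diag /dcoc /V0.
case: eqP => // hab.
have [h1|h1] := boolP (0 <= a - n); have [h2|h2] := boolP (0 <= a);
  repeat case: ifP => ?; try lia; ring.
Qed.

Lemma act_w al be m f w a : act al be m f a (w + m - a) =
  - (((a - m)%:~R + al * m%:~R) * f (a - m) (w - (a - m)))
  - (((w - a)%:~R + be * m%:~R) * f a (w - a)).
Proof.
rewrite /act.
rewrite (_ : w + m - a = w - (a - m)); last by ring.
rewrite (_ : w - (a - m) - m = w - a); last by ring.
done.
Qed.

Lemma nzB be (z : int) : ~ is_int be -> z%:~R - be != 0.
Proof. move=> hb; apply/negP => /eqP h; apply: hb; exists z; apply/eqP; rewrite eq_sym -subr_eq0 h. done. Qed.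

Lemma nzD be (z : int) : ~ is_int be -> z%:~R + be != 0.
Proof.
move=> hb; apply/negP => /eqP h; apply: hb; exists (- z).
by rewrite rmorphN; apply/eqP; rewrite -addr_eq0 addrC h.
Qed.

Lemma act0E al be f a b : act al be 0 f a b = - ((a + b)%:~R * f a b).
Proof. rewrite /act !subr0 rmorphD /=; ring. Qed.

Lemma ker1_zero al be (hb : ~ is_int be) (w N : int) (H : tens) :
  (forall a b, a + b != w -> H a b = 0) ->
  (forall a, a < N -> H a (w - a) = 0) ->
  (forall a b, act al be 1 H a b = 0) -> forall a b, H a b = 0.
Proof.
move=> Hoff Hlow Hk.
have P : forall a, H a (w - a) = 0.
  apply: (@up_ind _ N) => // a IH.
  have := Hk a (w + 1 - a); rewrite act_w IH mulr0 oppr0 sub0r rmorph1 mulr1.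
  move/eqP; rewrite oppr_eq0 mulf_eq0 (negbTE (nzD _ _ hb)) /= => /eqP //.
move=> a b; have [h|h] := eqVneq (a + b) w; last exact: Hoff.
by rewrite -(P a); congr H; lia.
Qed.

Lemma kerm1_zero al be (hb : ~ is_int be) (w N : int) (H : tens) :
  (forall a b, a + b != w -> H a b = 0) ->
  (forall a, N < a -> H a (w - a) = 0) ->
  (forall a b, act al be (-1) H a b = 0) -> forall a b, H a b = 0.
Proof.
move=> Hoff Hup Hk.
have P : forall a, H a (w - a) = 0.
  apply: (@down_ind _ N) => // a IH.
  have := Hk a (w + -1 - a); rewrite act_w opprK IH mulr0 oppr0 sub0r.
  rewrite rmorphN rmorph1 mulrN1.
  move/eqP; rewrite oppr_eq0 mulf_eq0 (negbTE (nzB _ _ hb)) /= => /eqP //.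
move=> a b; have [h|h] := eqVneq (a + b) w; last exact: Hoff.
by rewrite -(P a); congr H; lia.
Qed.

Lemma step1 al be (hb : ~ is_int be) d : is_der al be d ->
  exists v1, fin_supp v1 /\
    (forall n a b, a + b != n -> d n a b = act al be n v1 a b) /\
    (forall a b, d 0 a b = act al be 0 v1 a b).
Proof.
case=> Hfs Hd.
pose v1 a b := if a + b == 0 then 0 else - d 0 a b / (a + b)%:~R.
have fsv : fin_supp v1.
  case: (fsP (Hfs 0)) => N [N0 HN]; apply: (@fsI _ N) => a b h.
  by rewrite /v1 (HN a b h); case: ifP; rewrite ?oppr0 ?mul0r.
pose e n a b := d n a b - act al be n v1 a b.
have He : der' al be e := der'_sub Hd (der'_act al be v1).
have e0off : forall a b, a + b != 0 -> e 0 a b = 0.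
  move=> a b h; rewrite /e act0E /v1 (negbTE h).
  have hz := intr_neq0 h.
  by field; rewrite -intrD.
have fse0 : fin_supp (e 0) := fs_sub (Hfs 0) (fs_act al be 0 fsv).
have key : forall n a b, act al be n (e 0) a b = (n - (a + b))%:~R * e n a b.
  move=> n a b; have h := He 0 n a b; rewrite !add0r act0E in h.
  have -> : act al be n (e 0) a b = - ((a + b)%:~R * e n a b) - (- n)%:~R * e n a b.
    by rewrite h; ring.
  rewrite !rmorphB rmorphD /=; ring.
have actw0 : forall n a b, act al be n (e 0) a b = 0.
  move=> n a b; have [h|h] := eqVneq (a + b) n.
    by rewrite key h subrr mul0r.
  rewrite /act !e0off; try (apply/eqP; lia).
  ring.
have w0 : forall a b, e 0 a b = 0.
  case: (fsP fse0) => N [N0 HN].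
  apply: (@ker1_zero al be hb 0 (- N) (e 0)).
  - exact: e0off.
  - move=> a ha; apply: HN; lia.
  - exact: actw0.
exists v1; split => //; split.
  move=> n a b h; have := key n a b; rewrite actw0 => /eqP.
  rewrite eq_sym mulf_eq0 intr_eq0 => /orP [/eqP hh|/eqP hh]; first by exfalso; move/negP: h; apply; apply/eqP; lia.
  by apply/eqP; rewrite -subr_eq0; apply/eqP.
by move=> a b; apply/eqP; rewrite -subr_eq0; apply/eqP; exact: w0.
Qed.

Fixpoint urec (c1 c2 g : int -> CC) (N : int) (k : nat) : CC :=
  match k with
  | 0 => g N / c1 N
  | k'.+1 => (g (N + k%:Z) + c2 (N + k%:Z) * urec c1 c2 g N k') / c1 (N + k%:Z)
  end.

Lemma rec_exists (c1 c2 g : int -> CC) (N : int) : (forall a, c1 a != 0) ->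
  exists U : int -> CC, (forall a, a < N -> U a = 0) /\
    forall a, N <= a -> c1 a * U a - c2 a * U (a - 1) = g a.
Proof.
move=> hc.
exists (fun a => if a < N then 0 else urec c1 c2 g N (absz (a - N))).
split; first by move=> a ->.
move=> a ha.
have [k hk] : exists k : nat, a = N + k%:Z by exists (absz (a - N)); lia.
subst a.
rewrite (_ : (N + k%:Z < N) = false); last by lia.
rewrite (_ : absz (N + k%:Z - N)%R = k); last by lia.
case: k {ha} => [|k].
  rewrite (_ : (N + 0%:Z - 1 < N) = true); last by lia.
  rewrite addr0 /=; field; exact: hc.
rewrite (_ : (N + k.+1%:Z - 1 < N) = false); last by lia.
rewrite (_ : absz (N + k.+1%:Z - 1 - N)%R = k); last by lia.
rewrite /=; field; exact: hc.
Qed.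

Lemma tail al be (hb : ~ is_int be) (U0 : int -> CC) (N : int) : 0 <= N ->
  (forall a, a < - N -> U0 a = 0) ->
  (forall a, N < a -> (a%:~R - be) * U0 a - ((a - 1)%:~R + al) * U0 (a - 1) = 0) ->
  (forall a, N < a -> - (((a + 1)%:~R - al) * U0 (a + 1)) + (a%:~R + be) * U0 a = 0) ->
  (forall a, N < a -> - (((a + 2)%:~R - 2 * al) * U0 (a + 2)) + (a%:~R + 2 * be) * U0 a = 0) ->
  exists u0 c (M : int), (forall a, U0 a = u0 a + c * V0 a) /\
    (forall a, (a < - M) || (M < a) -> u0 a = 0) /\ (al + be != 1 -> c = 0).
Proof.
move=> N0 Hlow R1 Rm1 Rm2.
have [hab|hab] := eqVneq (al + be) 1.
  have hal : al = 1 - be by rewrite -hab; ring.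
  have st : forall a, N < a -> U0 a = U0 (a - 1).
    move=> a ha; have := R1 a ha; rewrite hal.
    rewrite (_ : (a - 1)%:~R + (1 - be) = a%:~R - be); last by rewrite intrB; ring.
    rewrite -mulrBr => /eqP; rewrite mulf_eq0 (negbTE (nzB _ _ hb)) /= subr_eq0.
    by move/eqP.
  have cst : forall k : nat, U0 (N + k%:Z) = U0 N.
    elim=> [|k IH]; first by rewrite addr0.
    rewrite st; last by lia.
    by rewrite -IH; congr U0; lia.
  exists (fun a => U0 a - U0 N * V0 a), (U0 N), N; split; first by move=> a; ring.
  split; last by move/eqP...
  move=> a /orP [h|h].
    rewrite Hlow // /V0 (_ : (0 <= a) = false); last by lia.
    ring.
  have [k ->] : exists k : nat, a = N + k%:Z by exists (absz (a - N)); lia.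
  rewrite cst /V0 (_ : (0 <= N + k%:Z) = true); last by lia.
  ring.
have [hee|hne] := eqVneq al be.
  subst al.
  have nz : 2 * be * (1 - be) * (1 - 2 * be) != 0.
    rewrite !mulf_neq0 //.
    - by rewrite (_ : 2 = 2%:~R) // intr_eq0.
    - by have := nzB be 0 hb; rewrite (_ : 0%:~R = 0) // sub0r oppr_eq0.
    - by have := nzB be 1 hb; rewrite (_ : 1%:~R = 1).
    - by move: hab; apply: contra => /eqP h; apply/eqP; rewrite -[1](subrK (2 * be)) h; ring.
  exists U0, 0, N; split; first by move=> a; ring.
  split => //.
  move=> a /orP [h|h]; first exact: Hlow.
  have e1 := R1 (a + 1) ltac:(lia).
  have e2 := R1 (a + 2) ltac:(lia).
  have e3 := Rm2 a ltac:(lia).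
  have : 2 * be * (1 - be) * (1 - 2 * be) * U0 a = 0.
    rewrite (_ : a + 2 - 1 = a + 1) in e2; last by ring.
    rewrite (_ : a + 1 - 1 = a) in e1; last by ring.
    set x := U0 a in e1 e3 *; set y := U0 (a + 1) in e1 e2; set z := U0 (a + 2) in e2 e3.
    have -> : 2 * be * (1 - be) * (1 - 2 * be) * x =
      ((a + 1)%:~R - be) * ((a + 2)%:~R - be) * (- (((a + 2)%:~R - 2 * be) * z) + (a%:~R + 2 * be) * x)
      + ((a + 2)%:~R - 2 * be) * ((a + 1)%:~R - be) * (((a + 2)%:~R - be) * z - ((a + 1)%:~R + be) * y)
      + ((a + 2)%:~R - 2 * be) * ((a + 1)%:~R + be) * (((a + 1)%:~R - be) * y - (a%:~R + be) * x).
      rewrite !intrD; ring.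
    by rewrite e3 e2 e1; ring.
  by move/eqP; rewrite mulf_eq0 (negbTE nz) /= => /eqP.
have nz : (al - be) * (1 - al - be) != 0.
  rewrite mulf_neq0 //; first by rewrite subr_eq0.
  rewrite (_ : 1 - al - be = 1 - (al + be)); last by ring.
  by rewrite subr_eq0 eq_sym.
exists U0, 0, N; split; first by move=> a; ring.
split => //.
move=> a /orP [h|h]; first exact: Hlow.
have e1 := R1 (a + 1) ltac:(lia).
have e3 := Rm1 a ltac:(lia).
have : (al - be) * (1 - al - be) * U0 a = 0.
  rewrite (_ : a + 1 - 1 = a) in e1; last by ring.
  set x := U0 a in e1 e3 *; set y := U0 (a + 1) in e1 e3.
  have -> : (al - be) * (1 - al - be) * x =
    - ((a + 1)%:~R - al) * (((a + 1)%:~R - be) * y - (a%:~R + al) * x)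
    - ((a + 1)%:~R - be) * (- (((a + 1)%:~R - al) * y) + (a%:~R + be) * x).
    rewrite !intrD; ring.
  by rewrite e3 e1; ring.
by move/eqP; rewrite mulf_eq0 (negbTE nz) /= => /eqP.
Qed.

Lemma eq0_opp (R : zmodType) (x y : R) : y = 0 -> x = - y -> x = 0.
Proof. by move=> -> ->; rewrite oppr0. Qed.

Lemma fs_diag (u0 : int -> CC) (M : int) :
  (forall a, (a < - M) || (M < a) -> u0 a = 0) -> fin_supp (diag u0).
Proof.
move=> H; apply: (@fsI _ M) => a b h; rewrite /diag.
case: eqP => // hab; apply: H; lia.
Qed.

Lemma step2 al be (hb : ~ is_int be) (e : int -> tens) :
  der' al be e -> (forall n, fin_supp (e n)) -> (forall a b, e 0 a b = 0) ->
  (forall n a b, a + b != n -> e n a b = 0) ->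
  exists u c, fin_supp u /\ (al + be != 1 -> c = 0) /\
    forall n a b, e n a b = act al be n u a b + c * act al be n (diag V0) a b.
Proof.
move=> He Hfs He0 Hoff.
case: (fsP (Hfs 1)) => N1 [N10 H1].
case: (fsP (Hfs (-1))) => N2 [N20 H2].
case: (fsP (Hfs 2)) => N3 [N30 H3].
case: (fsP (Hfs (-2))) => N4 [N40 H4].
have [N [N0 [l1 [l2 [l3 l4]]]]] : exists N : int,
    0 <= N /\ N1 <= N /\ N2 <= N /\ N3 <= N /\ N4 <= N.
  by exists (N1 + N2 + N3 + N4); lia.
have Z1 : forall a b, (a < - N) || (N < a) -> e 1 a b = 0.
  by move=> a b h; apply: H1; lia.
have Zm1 : forall a b, (a < - N) || (N < a) -> e (-1) a b = 0.
  by move=> a b h; apply: H2; lia.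
have Z2 : forall a b, (a < - N) || (N < a) -> e 2 a b = 0.
  by move=> a b h; apply: H3; lia.
have Zm2 : forall a b, (a < - N) || (N < a) -> e (-2) a b = 0.
  by move=> a b h; apply: H4; lia.
case: (rec_exists (fun a => a%:~R - be) (fun a => (a - 1)%:~R + al)
         (fun a => e 1 a (1 - a)) (- N) (fun a => nzB be a hb)) => U0 [Ulow Ueq].
have hrec : forall a, (a%:~R - be) * U0 a - ((a - 1)%:~R + al) * U0 (a - 1) = e 1 a (1 - a).
  move=> a; have [h|h] := boolP (a < - N); last by apply: Ueq; lia.
  rewrite Ulow // Ulow; last by lia.
  rewrite Z1; last by lia.
  ring.
pose U := diag U0.
pose e' n a b := e n a b - act al be n U a b.
have He' : der' al be e' := der'_sub He (der'_act al be U).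
have off' : forall n a b, a + b != n -> e' n a b = 0.
  by move=> n a b h; rewrite /e' act_diag (negbTE h) Hoff // subr0.
have e'1 : forall a b, e' 1 a b = 0.
  move=> a b; have [h|h] := eqVneq (a + b) 1; last exact: off'.
  rewrite /e' act_diag h eqxx.
  have -> : b = 1 - a by lia.
  rewrite -hrec; ring.
have e'0 : forall a b, e' 0 a b = 0.
  move=> a b; rewrite /e' He0 act_diag subr0; case: ifP => _; ring.
have A1 : forall a b, act al be 1 (e' (-1)) a b = 0.
  move=> a b; have := He' 1 (-1) a b.
  rewrite (act0 _ _ _ _ _ _ e'1) subr0 (_ : 1 + -1 = 0 :> int); last by lia.
  by rewrite e'0 mulr0.
have Em1 : forall a b, e' (-1) a b = 0.
  apply: (@ker1_zero al be hb (-1) (- N - 1) (e' (-1)) (off' (-1))) => // a ha.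
  rewrite /e' act_diag (_ : (a + (-1 - a) == -1) = true); last by apply/eqP; lia.
  rewrite Zm1; last by lia.
  rewrite !Ulow; try lia.
  ring.
have A2 : forall a b, act al be 1 (e' (-2)) a b = 0.
  move=> a b; have := He' 1 (-2) a b.
  rewrite (act0 _ _ _ _ _ _ e'1) subr0 (_ : 1 + -2 = -1 :> int); last by lia.
  by rewrite Em1 mulr0.
have Em2 : forall a b, e' (-2) a b = 0.
  apply: (@ker1_zero al be hb (-2) (- N - 2) (e' (-2)) (off' (-2))) => // a ha.
  rewrite /e' act_diag (_ : (a + (-2 - a) == -2) = true); last by apply/eqP; lia.
  rewrite Zm2; last by lia.
  rewrite !Ulow; try lia.
  ring.
have R1 : forall a, N < a -> (a%:~R - be) * U0 a - ((a - 1)%:~R + al) * U0 (a - 1) = 0.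
  by move=> a ha; rewrite hrec Z1 //; lia.
have Rm1 : forall a, N < a -> - (((a + 1)%:~R - al) * U0 (a + 1)) + (a%:~R + be) * U0 a = 0.
  move=> a ha; have h := Em1 a (-1 - a).
  rewrite /e' act_diag (_ : (a + (-1 - a) == -1) = true) in h; last by apply/eqP; lia.
  rewrite Zm1 in h; last by lia.
  rewrite (_ : a - -1 = a + 1) in h; last by lia.
  move: h; rewrite sub0r => /eqP; rewrite oppr_eq0 => /eqP h.
  rewrite -[RHS]h; ring.
have Rm2 : forall a, N < a -> - (((a + 2)%:~R - 2 * al) * U0 (a + 2)) + (a%:~R + 2 * be) * U0 a = 0.
  move=> a ha; have h := Em2 a (-2 - a).
  rewrite /e' act_diag (_ : (a + (-2 - a) == -2) = true) in h; last by apply/eqP; lia.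
  rewrite Zm2 in h; last by lia.
  rewrite (_ : a - -2 = a + 2) in h; last by lia.
  move: h; rewrite sub0r => /eqP; rewrite oppr_eq0 => /eqP h.
  rewrite -[RHS]h; ring.
have [u0 [c [M [hU [hu0 hc]]]]] := @tail al be hb U0 N N0 (fun a ha => Ulow a ha) R1 Rm1 Rm2.
exists (diag u0), c; split; first exact: (@fs_diag u0 M hu0).
split => //.
have dec : forall n a b, act al be n U a b = act al be n (diag u0) a b + c * act al be n (diag V0) a b.
  move=> n a b; rewrite -act_scale -act_add; apply: act_ext => x y.
  rewrite /U /diag; case: ifP => _; rewrite ?hU; ring.
have A3 : forall a b, act al be (-1) (e' 2) a b = 0.
  move=> a b; have := He' (-1) 2 a b.
  rewrite (act0 _ _ _ _ _ _ Em1) subr0 (_ : -1 + 2 = 1 :> int); last by lia.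
  by rewrite e'1 mulr0.
have E2 : forall a b, e' 2 a b = 0.
  apply: (@kerm1_zero al be hb 2 (N + `|M| + 2) (e' 2) (off' 2)) => // a ha.
  rewrite /e' dec !act_diag (_ : (a + (2 - a) == 2) = true); last by apply/eqP; lia.
  rewrite Z2; last by lia.
  rewrite !hu0; try lia.
  rewrite /V0 (_ : (0 <= a - 2) = true); last by lia.
  rewrite (_ : (0 <= a) = true); last by lia.
  have [h|h] := eqVneq (al + be) 1.
    have -> : al = 1 - be by rewrite -h; ring.
    rewrite intrB; ring.
  rewrite hc //; ring.
have Z := @gen_zero al be e' He' e'1 Em1 E2 Em2.
move=> n a b; have := Z n a b; rewrite /e' -dec => /eqP; rewrite subr_eq0 => /eqP //.
Qed.

Lemma main_case al be (hb : ~ is_int be) d : is_der al be d ->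
  exists u c, fin_supp u /\ (al + be != 1 -> c = 0) /\
    forall n a b, d n a b = act al be n u a b + c * act al be n (diag V0) a b.
Proof.
move=> Hd.
case: (@step1 al be hb d Hd) => v1 [fv [hoff h0]].
pose e n a b := d n a b - act al be n v1 a b.
have He : der' al be e := der'_sub (@der'_of al be d Hd) (der'_act al be v1).
have Hfs : forall n, fin_supp (e n).
  by move=> n; apply: fs_sub; [exact: (proj1 Hd n) | exact: fs_act].
have He0 : forall a b, e 0 a b = 0 by move=> a b; rewrite /e h0 subrr.
have Hoff : forall n a b, a + b != n -> e n a b = 0.
  by move=> n a b h; rewrite /e hoff // subrr.
case: (@step2 al be hb e He Hfs He0 Hoff) => u [c [fu [hc hu]]].
exists (fun a b => v1 a b + u a b), c; split; first exact: fs_add.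
split => // n a b.
rewrite act_add -addrA -hu /e.
by rewrite addrC subrK.
Qed.

Definition flip (f : tens) : tens := fun a b => f b a.

Lemma act_flip al be m f a b : act al be m (flip f) a b = act be al m f b a.
Proof. rewrite /act /flip; ring. Qed.

Lemma fs_flip f : fin_supp f -> fin_supp (flip f).
Proof.
move=> /fsP [N [N0 HN]]; apply: (@fsI _ N) => a b h; rewrite /flip HN //; lia.
Qed.

Lemma is_der_flip al be d : is_der al be d -> is_der be al (fun n => flip (d n)).
Proof.
case=> Hfs Hd; split; first by move=> n; apply: fs_flip.
by move=> m n a b; rewrite 2!act_flip /flip Hd.
Qed.

From Stdlib Require Import Classical.

Lemma gen_case al be (h : ~ (is_int al /\ is_int be)) d : is_der al be d ->
  exists u c, fin_supp u /\ (al + be != 1 -> c = 0) /\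
    forall n a b, d n a b = act al be n u a b + c * act al be n (diag V0) a b.
Proof.
move=> Hd.
case: (classic (is_int be)) => hb; last exact: main_case.
have ha : ~ is_int al by move=> ha; apply: h.
case: (@main_case be al ha _ (@is_der_flip al be d Hd)) => u [c [fu [hc hu]]].
have hc0 : c = 0.
  apply: hc; apply/negP => /eqP hba; apply: ha.
  case: hb => z hz; exists (1 - z); rewrite intrB -hz -hba; ring.
exists (flip u), 0; split; first exact: fs_flip.
split => // n a b.
have := hu n b a; rewrite /flip hc0 => ->.
by rewrite (act_flip al be n u) !mul0r.
Qed.

Lemma dcoc_der be : is_der (1 - be) be (dcoc be).
Proof.
split.
  move=> n; apply: (@fsI _ `|n|) => a b h; rewrite /dcoc.
  case: eqP => // hab.
  case: ifP => [/andP [/andP [h1 h2] h3]|_]; first by exfalso; lia.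
  case: ifP => [/andP [/andP [h1 h2] h3]|_] //; by exfalso; lia.
move=> m n a b.
rewrite !dcocE (act_ext _ _ _ _ _ _ _ (dcocE be n)) (act_ext _ _ _ _ _ _ _ (dcocE be m)).
exact: der'_act.
Qed.

Lemma dcoc_not_inn be : ~ is_int be -> ~ is_inn (1 - be) be (dcoc be).
Proof.
move=> hb [v [fv hv]].
case: (fsP fv) => N [N0 HN].
pose X a := V0 a - v a (- a).
have st : forall a, X a = X (a - 1).
  move=> a; have := hv 1 a (0 + 1 - a).
  rewrite dcocE => /eqP; rewrite -subr_eq0 -act_sub act_w /diag.
  rewrite (_ : (a - 1 + (0 - (a - 1)) == 0) = true); last by apply/eqP; lia.
  rewrite (_ : (a + (0 - a) == 0) = true); last by apply/eqP; lia.
  rewrite !sub0r rmorph1 !mulr1.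
  rewrite (_ : (a - 1)%:~R + (1 - be) = a%:~R - be); last by rewrite intrB; ring.
  rewrite (_ : (- a)%:~R + be = - (a%:~R - be)); last by rewrite rmorphN; ring.
  rewrite mulNr opprK addrC -mulrBr -/(X (a - 1)) -/(X a) mulf_eq0 (negbTE (nzB be a hb)) /=.
  by rewrite subr_eq0 => /eqP.
have X0 : forall a, X a = 0.
  apply: (@up_ind _ (- N)).
    move=> a ha; rewrite /X /V0 HN; last by lia.
    by rewrite (_ : (0 <= a) = false) ?subrr //; lia.
  by move=> a h; rewrite st.
have := X0 (N + 1); rewrite /X /V0 HN; last by lia.
rewrite (_ : (0 <= N + 1) = true); last by lia.
by rewrite subr0 => /eqP; rewrite oner_eq0.
Qed.

Theorem mainTheorem2 (alpha beta : CC) :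
  ~ (is_int alpha /\ is_int beta) ->
  (alpha + beta != 1 -> H1_zero alpha beta) /\
  (alpha + beta = 1 ->
     (* [d_{1-beta,beta}] is a nonzero class in H^1 ... *)
     is_der (1 - beta) beta (dcoc beta) /\
     ~ is_inn (1 - beta) beta (dcoc beta) /\
     (* ... spanning H^1(W, F_{1-beta} (x) F_beta) *)
     (forall d, is_der (1 - beta) beta d ->
        exists c : CC, is_inn (1 - beta) beta
          (fun n a b => d n a b - c * dcoc beta n a b))).
Proof.
move=> hnot; split.
  move=> hne d Hd.
  case: (@gen_case alpha beta hnot d Hd) => u [c [fu [hc hd]]].
  exists u; split => // n a b.
  by rewrite hd hc // mul0r addr0.
move=> hab.
have hal : alpha = 1 - beta by rewrite -hab; ring.
have hb : ~ is_int beta.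
  move=> hb; apply: hnot; split => //.
  case: hb => z hz; exists (1 - z); rewrite hal intrB hz.
  done.
subst alpha.
split; first exact: dcoc_der.
split; first exact: dcoc_not_inn.
move=> d Hd.
case: (@gen_case (1 - beta) beta hnot d Hd) => u [c [fu [hc hd]]].
exists c, u; split => // n a b.
rewrite hd dcocE.
by rewrite addrK.
Qed.
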